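(* Let $K$ be a subdivision of the standard $n$-simplex, i.e. an ordered, locally finite simplicial complex with $|K|=\Delta^n\subset\mathbb{A}^n$ such that every simplex of $K$ is affinely contained in a simplex of $\Delta^n$. Then there exists a smooth homotopy $\{h_t:\mathbb{A}^n\to\mathbb{A}^n\}_{t\in[0,1]}$ such that (i) $h_0=\mathrm{id}$; (ii) for every $t$, $h_t$ maps each closed simplex of $K$ into itself; (iii) each closed simplex of $K$ has an open neighborhood in $\mathbb{A}^n$ which $h_1$ maps into that same simplex.
   Context: $\mathbb{A}^n=\{x\in\mathbb{R}^{n+1}:\sum_ix_i=1\}$, an affine space of dimension $n$, and $\Delta^n\subset\mathbb{A}^n$ is the closed standard simplex (all coordinates nonnegative). A smooth homotopy means a smooth map $\mathbb{A}^n\times[0,1]\to\mathbb{A}^n$ (equivalently, after reparametrization, smooth in $t$). *)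

(* Defs.v *)
From Stdlib Require Import Reals.
From mathcomp Require Import all_boot.

Set Implicit Arguments.
Unset Strict Implicit.
Unset Printing Implicit Defensive.

Local Open Scope R_scope.

(* A point of R^(n+1); A^n and Delta^n live inside this space. *)
Definition pt (n : nat) := 'I_n.+1 -> R.

Definition inA (n : nat) (x : pt n) : Prop :=
  \big[Rplus/0]_(i < n.+1) x i = 1.

Definition inDelta (n : nat) (x : pt n) : Prop :=
  inA x /\ forall i, 0 <= x i.

(* A geometric simplex is given by its (ordered) list of vertices;
   in_hull s x : x lies in the closed simplex (convex hull) spanned by s. *)
Definition in_hull (n : nat) (s : seq (pt n)) (x : pt n) : Prop :=
  exists w : nat -> R,
    (forall j, (j < size s)%N -> 0 <= w j) /\
    \big[Rplus/0]_(j < size s) w j = 1 /\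
    forall i, x i = \big[Rplus/0]_(j < size s) (w j * nth (fun _ => 0) s j i).

Definition aff_indep (n : nat) (s : seq (pt n)) : Prop :=
  forall c : nat -> R,
    \big[Rplus/0]_(j < size s) c j = 0 ->
    (forall i, \big[Rplus/0]_(j < size s) (c j * nth (fun _ => 0) s j i) = 0) ->
    forall j, (j < size s)%N -> c j = 0.

Definition face (n : nat) (t s : seq (pt n)) : Prop :=
  exists m : bitseq, size m = size s /\ t = mask m s /\ t <> [::].

Record subdivides_std_simplex (n : nat) (K : seq (pt n) -> Prop) : Prop := {
  sd_nonempty : forall s, K s -> s <> [::];
  sd_indep : forall s, K s -> aff_indep s;
  sd_faces : forall s t, K s -> face t s -> K t;
  sd_inter : forall s t, K s -> K t ->
    (forall x, ~ (in_hull s x /\ in_hull t x)) \/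
    (exists r, face r s /\ face r t /\
       forall x, in_hull r x <-> (in_hull s x /\ in_hull t x));
  sd_ordered : forall s t, K s -> K t ->
    (forall x, in_hull s x <-> in_hull t x) -> s = t;
  sd_locfin : forall x : pt n, exists d, 0 < d /\
    exists L : seq (seq (pt n)), forall s, K s ->
      (exists y, in_hull s y /\ forall i, Rabs (y i - x i) < d) -> List.In s L;
  sd_support : forall x : pt n, inDelta x <-> exists s, K s /\ in_hull s x;
  sd_in_face : forall s, K s -> exists F : seq 'I_n.+1, F <> [::] /\
    forall x, in_hull s x -> inDelta x /\ forall i, i \notin F -> x i = 0
}.

Definition upd (m : nat) (x : 'I_m -> R) (i : 'I_m) (s : R) : 'I_m -> R :=
  fun j => if j == i then s else x j.

Definition contR (m : nat) (f : ('I_m -> R) -> R) : Prop :=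
  forall x eps, 0 < eps -> exists d, 0 < d /\
    forall y, (forall i, Rabs (y i - x i) < d) -> Rabs (f y - f x) < eps.

Fixpoint Ck (m k : nat) (f : ('I_m -> R) -> R) : Prop :=
  match k with
  | 0 => contR f
  | k'.+1 => contR f /\ forall i : 'I_m, exists g : ('I_m -> R) -> R,
      (forall x, derivable_pt_lim (fun s => f (upd x i s)) (x i) (g x)) /\ Ck k' g
  end.

Definition smooth (m : nat) (f : ('I_m -> R) -> R) : Prop := forall k, Ck k f.

(* H : R^(n+1) x R -> R^(n+1) is smooth (as a map R^(n+2) -> R^(n+1),
   the last coordinate being the time t). *)
Definition smooth_homotopy (n : nat) (H : pt n -> R -> pt n) : Prop :=
  forall j : 'I_n.+1,
    smooth (fun v : 'I_n.+2 -> R =>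
              H (fun i => v (widen_ord (leqnSn n.+1) i)) (v ord_max) j).

Definition open_in_A (n : nat) (U : pt n -> Prop) : Prop :=
  forall x, U x -> inA x /\ exists d, 0 < d /\
    forall y, inA y -> (forall i, Rabs (y i - x i) < d) -> U y.

(* Main.v *)
Require Import Defs.
From Stdlib Require Import Reals.
From mathcomp Require Import all_boot.
From Stdlib Require Import Lra.
From Stdlib Require Import Classical ClassicalEpsilon FunctionalExtensionality.
From HB Require Import structures.
From Coquelicot Require Compactness.
Set Implicit Arguments.
Unset Strict Implicit.
Set Warnings "-redundant-canonical-projection -notation-overridden".
Local Open Scope R_scope.


Lemma Rplus_assoc' : associative Rplus. Proof. move=> *; ring. Qed.
Lemma Rmult_assoc' : associative Rmult. Proof. move=> *; ring. Qed.
HB.instance Definition _ := Monoid.isComLaw.Build R 0 Rplus Rplus_assoc' Rplus_comm Rplus_0_l.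
HB.instance Definition _ := Monoid.isComLaw.Build R 1 Rmult Rmult_assoc' Rmult_comm Rmult_1_l.

Lemma cont_pt_eps (f : R -> R) y : continuity_pt f y ->
  forall e, 0 < e -> exists d, 0 < d /\ forall z, Rabs (z - y) < d -> Rabs (f z - f y) < e.
Proof.
move=> H e He; case: (H e He) => d [Hd Hz]; exists d; split=> // z Hzy.
case: (Req_dec z y) => [->|Hne]; first by rewrite Rminus_diag Rabs_R0.
exact: (Hz z (conj (conj I (not_eq_sym Hne)) Hzy)).
Qed.

Lemma contR_const m c : @contR m (fun _ => c).
Proof. move=> x e He; exists 1; split; first lra. move=> y _; rewrite Rminus_diag Rabs_R0; lra. Qed.

Lemma contR_proj m j : @contR m (fun x => x j).
Proof. move=> x e He; exists e; split=> // y Hy; exact: Hy. Qed.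

Lemma contR_plus m f g : @contR m f -> contR g -> contR (fun x => f x + g x).
Proof.
move=> Hf Hg x e He.
case: (Hf x (e/2) ltac:(lra)) => d1 [Hd1 H1]; case: (Hg x (e/2) ltac:(lra)) => d2 [Hd2 H2].
exists (Rmin d1 d2); split; first by apply: Rmin_pos.
move=> y Hy.
have Hy1 : forall i, Rabs (y i - x i) < d1 by move=> i; have := Hy i; have := Rmin_l d1 d2; lra.
have Hy2 : forall i, Rabs (y i - x i) < d2 by move=> i; have := Hy i; have := Rmin_r d1 d2; lra.
have := H1 _ Hy1; have := H2 _ Hy2.
replace (f y + g y - (f x + g x)) with ((f y - f x) + (g y - g x)) by ring.
have := Rabs_triang (f y - f x) (g y - g x); lra.
Qed.

Lemma contR_mult m f g : @contR m f -> contR g -> contR (fun x => f x * g x).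
Proof.
move=> Hf Hg x e He.
set A := Rabs (f x) + 1; set B := Rabs (g x) + 1.
have HA : 0 < A by rewrite /A; have := Rabs_pos (f x); lra.
have HB : 0 < B by rewrite /B; have := Rabs_pos (g x); lra.
have He1 : 0 < e / (2 * B) by apply: Rdiv_lt_0_compat; lra.
have He2 : 0 < Rmin 1 (e / (2 * A)) by apply: Rmin_pos; [lra| apply: Rdiv_lt_0_compat; lra].
case: (Hf x _ He1) => d1 [Hd1 H1].
case: (Hg x _ He2) => d2 [Hd2 H2].
exists (Rmin d1 d2); split; first by apply: Rmin_pos.
move=> y Hy.
have Hy1 : forall i, Rabs (y i - x i) < d1 by move=> i; have := Hy i; have := Rmin_l d1 d2; lra.
have Hy2 : forall i, Rabs (y i - x i) < d2 by move=> i; have := Hy i; have := Rmin_r d1 d2; lra.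
have F1 := H1 _ Hy1; have G1 := H2 _ Hy2.
have G2 : Rabs (g y - g x) < 1 by have := Rmin_l 1 (e / (2 * A)); lra.
have G3 : Rabs (g y - g x) < e / (2 * A) by have := Rmin_r 1 (e / (2 * A)); lra.
have Hgy : Rabs (g y) <= B.
  replace (g y) with ((g y - g x) + g x) by ring.
  have := Rabs_triang (g y - g x) (g x); rewrite /B; lra.
replace (f y * g y - f x * g x) with ((f y - f x) * g y + f x * (g y - g x)) by ring.
apply: Rle_lt_trans; first exact: Rabs_triang.
rewrite !Rabs_mult.
have T1 : Rabs (f y - f x) * Rabs (g y) <= e / (2 * B) * B.
  apply: Rmult_le_compat; try exact: Rabs_pos; lra.
have E1 : e / (2 * B) * B = e / 2 by field; lra.
have E2 : A * (e / (2 * A)) = e / 2 by field; lra.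
have T3 : Rabs (f x) * Rabs (g y - g x) < A * (e / (2 * A)).
  have := Rabs_pos (f x).
  case: (Req_dec (Rabs (f x)) 0) => [->|Hn] _. rewrite Rmult_0_l E2; lra.
  apply: Rle_lt_trans (_ : Rabs (f x) * (e / (2 * A)) < _).
  apply: Rmult_le_compat_l; [exact: Rabs_pos| lra].
  apply: Rmult_lt_compat_r; [apply: Rdiv_lt_0_compat; lra| rewrite /A; lra].
lra.
Qed.

Lemma contR_comp m f (phi : R -> R) : @contR m f -> (forall x, continuity_pt phi (f x)) ->
  contR (fun x => phi (f x)).
Proof.
move=> Hf Hp x e He.
case: (cont_pt_eps (Hp x) He) => d1 [Hd1 H1].
case: (Hf x d1 Hd1) => d [Hd H]; exists d; split=> // y Hy; exact: H1 (H y Hy).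
Qed.

Lemma contR_ext m f g : @contR m f -> (forall x, f x = g x) -> contR g.
Proof. by move=> H E; have -> : g = f by apply: functional_extensionality => x; rewrite E. Qed.

Definition Cder m (f : ('I_m -> R) -> R) i (g : ('I_m -> R) -> R) :=
  forall x, derivable_pt_lim (fun s => f (upd x i s)) (x i) (g x).

Lemma upd_same m (x : 'I_m -> R) i : upd x i (x i) = x.
Proof. apply: functional_extensionality => j; rewrite /upd; by case: eqP => [->|]. Qed.

Lemma Ck_cont m k f : @Ck m k f -> contR f.
Proof. by case: k => [|k] //= [] . Qed.

Lemma Ck_down m k f : @Ck m k.+1 f -> Ck k f.
Proof.
elim: k f => [|k IH] f /=; first by case.
case=> Hc H; split=> // i; case: (H i) => g [Hg Hk]; exists g; split=> //; exact: IH.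
Qed.

Lemma Ck_le m k k' f : (k' <= k)%N -> @Ck m k f -> Ck k' f.
Proof.
elim: k => [|k IH]; first by rewrite leqn0 => /eqP ->.
rewrite leq_eqVlt => /orP [/eqP ->//| H] Hf; apply: IH => //; exact: Ck_down.
Qed.

Lemma Ck_ext m k f g : @Ck m k f -> (forall x, f x = g x) -> Ck k g.
Proof. by move=> H E; have -> : g = f by apply: functional_extensionality => x; rewrite E. Qed.

Lemma Ck_const m k c : @Ck m k (fun _ => c).
Proof.
elim: k c => [|k IH] c /=; first exact: contR_const.
split; first exact: contR_const.
move=> i; exists (fun _ => 0); split=> // x; exact: derivable_pt_lim_const.
Qed.

Lemma Ck_proj m k j : @Ck m k (fun x => x j).
Proof.
case: k => [|k] /=; first exact: contR_proj.
split; first exact: contR_proj.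
move=> i; exists (fun _ => if j == i then 1 else 0); split; last exact: Ck_const.
move=> x; rewrite /upd; case: (j == i).
- exact: derivable_pt_lim_id.
- exact: derivable_pt_lim_const.
Qed.

Lemma Ck_plus m k f g : @Ck m k f -> Ck k g -> Ck k (fun x => f x + g x).
Proof.
elim: k f g => [|k IH] f g /=; first exact: contR_plus.
case=> Hf Df [] Hg Dg; split; first exact: contR_plus.
move=> i; case: (Df i) => f' [Hf' Cf']; case: (Dg i) => g' [Hg' Cg'].
exists (fun x => f' x + g' x); split; last exact: IH.
move=> x; exact: (derivable_pt_lim_plus (fun s => f (upd x i s)) (fun s => g (upd x i s))).
Qed.

Lemma Ck_mult m k f g : @Ck m k f -> Ck k g -> Ck k (fun x => f x * g x).
Proof.
elim: k f g => [|k IH] f g; first exact: contR_mult.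
move=> Cf Cg; have Cf0 := Ck_down Cf; have Cg0 := Ck_down Cg.
move: Cf Cg => /= [Hf Df] [Hg Dg]; split; first exact: contR_mult.
move=> i; case: (Df i) => f' [Hf' Cf']; case: (Dg i) => g' [Hg' Cg'].
exists (fun x => f' x * g x + f x * g' x); split; last by apply: Ck_plus; apply: IH.
move=> x; have := (derivable_pt_lim_mult (fun s => f (upd x i s)) (fun s => g (upd x i s)) _ _ _ (Hf' x) (Hg' x)).
by rewrite /= upd_same.
Qed.

Definition smooth1 (D : R -> Prop) (phi : R -> R) : Prop :=
  exists C : (R -> R) -> Prop, C phi /\
    forall psi, C psi -> exists psi', (forall y, D y -> derivable_pt_lim psi y (psi' y)) /\ C psi'.

Lemma Ck_comp m k D phi f : smooth1 D phi -> @Ck m k f -> (forall x, D (f x)) ->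
  Ck k (fun x => phi (f x)).
Proof.
case=> C [Cphi HC] Cf HD.
elim: k f Cf HD phi Cphi => [|k IH] f Cf HD phi Cphi.
  apply: contR_comp => // x; case: (HC _ Cphi) => psi' [Hd _].
  apply: derivable_continuous_pt; exists (psi' (f x)); exact: Hd.
have Cf0 := Ck_down Cf.
move: Cf => /= [Hf Df]; case: (HC _ Cphi) => phi' [Hphi' Cphi'].
split.
  apply: contR_comp => // x.
  apply: derivable_continuous_pt; exists (phi' (f x)); exact: Hphi'.
move=> i; case: (Df i) => f' [Hf' Cf'].
exists (fun x => phi' (f x) * f' x); split; last by apply: Ck_mult => //; apply: IH.
move=> x; have := derivable_pt_lim_comp (fun s => f (upd x i s)) phi _ _ _ (Hf' x).
rewrite upd_same => H; exact: (H _ (Hphi' _ (HD x))).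
Qed.

Lemma Ck_big m k (T : Type) (r : seq T) (F : T -> ('I_m -> R) -> R) :
  (forall p, Ck k (F p)) -> Ck k (fun x => \big[Rplus/0]_(p <- r) F p x).
Proof.
move=> H; elim: r => [|a r IH].
  apply: (Ck_ext (Ck_const m k 0)) => x; by rewrite big_nil.
apply: (Ck_ext (Ck_plus (H a) IH)) => x; by rewrite big_cons.
Qed.


Lemma dpl_ext (f g : R -> R) y l : (forall z, f z = g z) -> derivable_pt_lim g y l -> derivable_pt_lim f y l.
Proof. by move=> E; have -> : f = g by apply: functional_extensionality. Qed.

Lemma dpl_ext2 (f g : R -> R) y l l' : (forall z, f z = g z) -> l = l' -> derivable_pt_lim g y l' -> derivable_pt_lim f y l.
Proof. move=> E ->; exact: dpl_ext. Qed.

Lemma dpl_loc (f g : R -> R) y l d : 0 < d -> (forall z, Rabs (z - y) < d -> f z = g z) ->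
  derivable_pt_lim g y l -> derivable_pt_lim f y l.
Proof.
move=> Hd E H eps He; case: (H eps He) => del Hdel.
have Hm : 0 < Rmin del d by apply: Rmin_pos => //; exact: cond_pos.
exists (mkposreal _ Hm) => h Hh Hlt /=.
rewrite (E y); last by rewrite Rminus_diag Rabs_R0.
rewrite (E (y + h)); last by replace (y + h - y) with h by ring; simpl in Hlt; have := Rmin_r del d; lra.
apply: Hdel => //; simpl in Hlt; have := Rmin_l del d; lra.
Qed.

Lemma dinv y : y <> 0 -> derivable_pt_lim Rinv y (- (/ y) ^ 2).
Proof.
move=> Hy.
have H := derivable_pt_lim_div (fun _ => 1) id y 0 1 (derivable_pt_lim_const 1 y) (derivable_pt_lim_id y) Hy.
apply: (dpl_ext (g := (fun _ => 1) / id)%F); first by move=> z; rewrite /div_fct /Rdiv Rmult_1_l.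
by replace (- (/ y) ^ 2) with ((0 * id y - 1 * 1) / (id y)²) by (rewrite /Rsqr /id; field; exact: Hy).
Qed.

Lemma smooth1_inv : smooth1 (fun y => 0 < y) Rinv.
Proof.
exists (fun psi => exists a m, psi = fun y => a * (/ y) ^ m); split.
  by exists 1, 1%N; apply: functional_extensionality => y /=; ring.
move=> psi [a [m ->]]; exists (fun y => - (a * INR m) * (/ y) ^ m.+1); split; last by eauto.
move=> y Hy.
have H1 := derivable_pt_lim_comp Rinv (fun z => z ^ m) y _ _ (dinv (Rgt_not_eq _ _ Hy)) (derivable_pt_lim_pow (/ y) m).
have H2 := derivable_pt_lim_scal _ a _ _ H1.
apply: (dpl_ext2 _ _ H2) => [z //|].
have Hy' : y <> 0 by lra.
case: m {H1 H2} => [|m] /=; first by ring.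
ring.
Qed.

Fixpoint ev (L : seq (R * nat)) (z : R) : R :=
  match L with [::] => 0 | (a, m) :: L' => a * z ^ m + ev L' z end.
Fixpoint dpoly (L : seq (R * nat)) : seq (R * nat) :=
  match L with [::] => [::] | (a, m) :: L' => (a * INR m, m.-1) :: dpoly L' end.
Fixpoint dL (L : seq (R * nat)) : seq (R * nat) :=
  match L with [::] => [::] | (a, m) :: L' => (a, m.+2) :: (- (a * INR m), m.+1) :: dL L' end.
Definition Fb L y := if Rlt_dec 0 y then ev L (/ y) * exp (- / y) else 0.

Lemma ev_der L z : derivable_pt_lim (ev L) z (ev (dpoly L) z).
Proof.
elim: L => [|[a m] L IH] /=; first exact: derivable_pt_lim_const.
have H := derivable_pt_lim_plus _ _ _ _ _ (derivable_pt_lim_scal _ a _ _ (derivable_pt_lim_pow z m)) IH.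
apply: (dpl_ext2 _ _ H) => [w //|]; rewrite /mult_real_fct; ring.
Qed.

Lemma ev_dL L z : ev (dL L) z = z ^ 2 * ev L z - z ^ 2 * ev (dpoly L) z.
Proof.
elim: L => [|[a m] L IH] /=; first ring.
rewrite IH; case: m => [|m] /=; first ring.
ring.
Qed.

Lemma Fb_der_pos L y : 0 < y -> derivable_pt_lim (Fb L) y (Fb (dL L) y).
Proof.
move=> Hy.
have Hy' : y <> 0 by lra.
apply: (dpl_loc (g := fun y => ev L (/ y) * exp (- / y)) Hy).
  move=> z Hz; rewrite /Fb; case: (Rlt_dec 0 z) => // H; exfalso; apply: H.
  have := Rabs_def2 _ _ Hz; lra.
have H1 := derivable_pt_lim_comp Rinv (ev L) y _ _ (dinv Hy') (ev_der L (/ y)).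
have H2 := derivable_pt_lim_comp (fun y => - / y) exp y _ _
  (derivable_pt_lim_opp _ _ _ (dinv Hy')) (derivable_pt_lim_exp (- / y)).
have H3 := derivable_pt_lim_mult _ _ _ _ _ H1 H2.
apply: (dpl_ext2 _ _ H3) => [w //|].
rewrite /Fb; case: (Rlt_dec 0 y) => // Hp; rewrite ev_dL /Ranalysis1.comp /=; ring.
Qed.

Lemma Fb_der_neg L y : y < 0 -> derivable_pt_lim (Fb L) y (Fb (dL L) y).
Proof.
move=> Hy.
have -> : Fb (dL L) y = 0 by rewrite /Fb; case: (Rlt_dec 0 y) => // Hq; lra.
apply: (dpl_loc (g := fun _ => 0) (d := - y)); first lra.
  move=> z Hz; rewrite /Fb; case: (Rlt_dec 0 z) => // H.
  have := Rabs_def2 _ _ Hz; lra.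
exact: derivable_pt_lim_const.
Qed.

Lemma exp_mul_nat N u : exp (INR N * u) = exp u ^ N.
Proof.
elim: N => [|N IH]; first by rewrite /= Rmult_0_l exp_0.
rewrite S_INR Rmult_plus_distr_r Rmult_1_l exp_plus IH /=; ring.
Qed.

Lemma growth N eps : 0 < eps -> exists Z, 0 < Z /\ forall z, Z <= z -> z ^ N * exp (- z) < eps.
Proof.
move=> He.
set c := INR N + 1.
have Hc : 0 < c by rewrite /c; have := pos_INR N; lra.
have Hcp : 0 < c ^ N.+1 by apply: pow_lt.
exists (c ^ N.+1 / eps + 1); split.
  have : 0 < c ^ N.+1 / eps by apply: Rdiv_lt_0_compat.
  lra.
move=> z Hz.
have Hq0 : 0 < c ^ N.+1 / eps by apply: Rdiv_lt_0_compat.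
have Hz0 : 0 < z by lra.
have E1 : exp z = exp (z / c) ^ N.+1.
  rewrite -exp_mul_nat; congr exp; rewrite /c S_INR; field; rewrite -/c; lra.
have E2 : z / c < exp (z / c).
  have := exp_ineq1 (z / c).
  have : 0 < z / c by apply: Rdiv_lt_0_compat.
  move=> h1 h2; have := h2 ltac:(lra); lra.
have E3 : (z / c) ^ N.+1 <= exp z.
  rewrite E1; apply: pow_incr; split; last lra.
  apply: Rlt_le; exact: Rdiv_lt_0_compat.
have E4 : (z / c) ^ N.+1 = z ^ N * z / c ^ N.+1.
  rewrite /Rdiv Rpow_mult_distr pow_inv /=; ring.
rewrite exp_Ropp.
have Hexp : 0 < exp z by apply: exp_pos.
have HzN : 0 < z ^ N by apply: pow_lt.
apply: (Rle_lt_trans _ (z ^ N * / ((z / c) ^ N.+1))).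
  apply: Rmult_le_compat_l; first lra.
  apply: Rinv_le_contravar => //; apply: pow_lt; exact: Rdiv_lt_0_compat.
rewrite E4.
have -> : z ^ N * / (z ^ N * z / c ^ N.+1) = c ^ N.+1 / z by field; lra.
have H1 : c ^ N.+1 / eps < z by lra.
apply: (Rmult_lt_reg_r z) => //.
rewrite /Rdiv Rmult_assoc Rinv_l; last lra.
rewrite Rmult_1_r.
have := Rmult_lt_compat_l eps _ _ He H1.
have -> : eps * (c ^ N.+1 / eps) = c ^ N.+1 by field; lra.
lra.
Qed.

Lemma ev_bound L : exists C M, 0 <= C /\ forall z, 1 <= z -> Rabs (ev L z) <= C * z ^ M.
Proof.
elim: L => [|[a m] L [C [M [HC IH]]]] /=.
  exists 0, 0%N; split=> [|z _]; first lra; rewrite Rabs_R0; lra.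
exists (Rabs a + C), (maxn m M); split=> [|z Hz]; first by have := Rabs_pos a; lra.
have P1 : z ^ m <= z ^ maxn m M by apply: Rle_pow => //; apply/leP; exact: leq_maxl.
have P2 : z ^ M <= z ^ maxn m M by apply: Rle_pow => //; apply/leP; exact: leq_maxr.
have Q : 0 <= z ^ m by apply: pow_le; lra.
apply: Rle_trans; first exact: Rabs_triang.
rewrite Rabs_mult (Rabs_pos_eq (z ^ m)) //.
have := IH z Hz.
have := Rabs_pos a.
nra.
Qed.

Lemma Fb_der_0 L : derivable_pt_lim (Fb L) 0 (Fb (dL L) 0).
Proof.
have -> : Fb (dL L) 0 = 0 by rewrite /Fb; case: (Rlt_dec 0 0) => // Hq; lra.
move=> eps He.
case: (ev_bound L) => C [M [HC HB]].
have Hec : 0 < eps / (C + 1) by apply: Rdiv_lt_0_compat; lra.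
case: (growth M.+1 Hec) => Z [HZ HG].
set Z' := Rmax 1 Z.
have HZ' : 0 < Z' by have := Rmax_l 1 Z; rewrite -/Z'; lra.
have Hd : 0 < / Z' by apply: Rinv_0_lt_compat.
exists (mkposreal _ Hd) => h Hh /= Hlt.
have -> : Fb L 0 = 0 by rewrite /Fb; case: (Rlt_dec 0 0) => // Hq; lra.
rewrite Rplus_0_l.
rewrite /Fb; case: (Rlt_dec 0 h) => Hp; last first. rewrite /=.
  have -> : (0 - 0) / h - 0 = 0 by field. rewrite Rabs_R0; lra.
set z := / h.
have Hz : Z' < z.
  rewrite /z; rewrite Rabs_pos_eq in Hlt; last lra.
  have := Rinv_lt_contravar h (/ Z') ltac:(apply: Rmult_lt_0_compat => //) Hlt.
  by rewrite Rinv_inv.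
have Hz1 : 1 <= z by have := Rmax_l 1 Z; rewrite -/Z'; lra.
have HzZ : Z <= z by have := Rmax_r 1 Z; rewrite -/Z'; lra.
have Hz0 : 0 < z by lra.
have -> : (ev L z * exp (- z) - 0) / h - 0 = ev L z * exp (- z) * z.
  rewrite /z; field; lra.
have He0 : 0 < exp (- z) by apply: exp_pos.
rewrite !Rabs_mult (Rabs_pos_eq (exp (- z))) ?(Rabs_pos_eq z); try lra.
have G := HG z HzZ.
have B := HB z Hz1.
have HzM : 0 < z ^ M by apply: pow_lt.
apply: (Rle_lt_trans _ (C * z ^ M * exp (- z) * z)).
  apply: Rmult_le_compat_r; first lra.
  apply: Rmult_le_compat_r; lra.
have -> : C * z ^ M * exp (- z) * z = C * (z ^ M.+1 * exp (- z)) by rewrite /=; ring.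
have Hq : 0 <= z ^ M.+1 * exp (- z) by apply: Rmult_le_pos; [apply: pow_le|]; lra.
apply: (Rle_lt_trans _ ((C + 1) * (z ^ M.+1 * exp (- z)))); first nra.
have := Rmult_lt_compat_l (C + 1) _ _ ltac:(lra) G.
have -> : (C + 1) * (eps / (C + 1)) = eps by field; lra.
done.
Qed.

Lemma Fb_der L y : derivable_pt_lim (Fb L) y (Fb (dL L) y).
Proof.
case: (Rtotal_order y 0) => [H|[->|H]]; [exact: Fb_der_neg| exact: Fb_der_0| exact: Fb_der_pos].
Qed.

Definition beta := Fb [:: (1, 0%N)].

Lemma smooth1_beta : smooth1 (fun _ => True) beta.
Proof.
exists (fun psi => exists L, psi = Fb L); split; first by exists [:: (1, 0%N)].
move=> psi [L ->]; exists (Fb (dL L)); split; last by eauto.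
move=> y _; exact: Fb_der.
Qed.

Lemma beta_pos y : 0 < y -> beta y = exp (- / y).
Proof. by move=> H; rewrite /beta /Fb; case: (Rlt_dec 0 y) => // _ /=; ring. Qed.

Lemma beta_npos y : y <= 0 -> beta y = 0.
Proof. by move=> H; rewrite /beta /Fb; case: (Rlt_dec 0 y) => // Hq; lra. Qed.

Lemma beta_gt0 y : 0 < y -> 0 < beta y.
Proof. move=> H; rewrite beta_pos //; exact: exp_pos. Qed.

Lemma beta_ge0 y : 0 <= beta y.
Proof.
case: (Rlt_le_dec 0 y) => H; [apply: Rlt_le; exact: beta_gt0| rewrite beta_npos //; lra].
Qed.

Lemma beta_le x y : x <= y -> beta x <= beta y.
Proof.
move=> H; case: (Rlt_le_dec 0 x) => Hx; last by rewrite (beta_npos Hx); exact: beta_ge0.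
rewrite !beta_pos; try lra.
case: (Req_dec x y) => [->|Hn]; first lra.
apply: Rlt_le; apply: exp_increasing.
apply: Ropp_lt_contravar; apply: Rinv_lt_contravar; [apply: Rmult_lt_0_compat|]; lra.
Qed.


Fixpoint toT (m : nat) (f : nat -> R) : Compactness.Tn m R :=
  match m with 0 => tt | m'.+1 => (f 0%N, toT m' (fun k => f k.+1)) end.
Fixpoint ofT (m : nat) : Compactness.Tn m R -> nat -> R :=
  match m return Compactness.Tn m R -> nat -> R with
  | 0 => fun _ _ => 0
  | m'.+1 => fun t k => match k with 0 => t.1 | k'.+1 => @ofT m' t.2 k' end
  end.

Lemma bounded_toT m a b (f : nat -> R) :
  Compactness.bounded_n m (toT m (fun _ => a)) (toT m (fun _ => b)) (toT m f) <->
  forall k, (k < m)%N -> a <= f k <= b.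
Proof.
elim: m f => [|m IH] f /=; first by split=> // _ k.
rewrite IH; split.
  move=> [H1 H2] [|k] Hk //=; exact: H2.
move=> H; split; [exact: H | move=> k Hk; exact: H].
Qed.

Lemma bounded_ofT m a b t :
  Compactness.bounded_n m (toT m (fun _ => a)) (toT m (fun _ => b)) t ->
  forall k, (k < m)%N -> a <= ofT t k <= b.
Proof.
elim: m t => [|m IH] [] //= t1 t2 [H1 H2] [|k] Hk //=; exact: IH.
Qed.

Lemma close_toT m d (f : nat -> R) t :
  Compactness.close_n m d (toT m f) t -> forall k, (k < m)%N -> Rabs (f k - ofT t k) < d.
Proof.
elim: m f t => [|m IH] f [] //= t1 t2 [H1 H2] [|k] Hk //=.
exact: (IH (fun k => f k.+1)).
Qed.

Lemma cover_box (m : nat) (a b : R) (delta : (nat -> R) -> R) : (forall w, 0 < delta w) ->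
  exists l : seq (nat -> R),
    forall x : nat -> R, (forall k, (k < m)%N -> a <= x k <= b) ->
      exists w, List.In w l /\ (forall k, (k < m)%N -> a <= w k <= b) /\
        forall k, (k < m)%N -> Rabs (x k - w k) < delta w.
Proof.
move=> Hd.
have H := Compactness.compactness_list m (toT m (fun _ => a)) (toT m (fun _ => b))
   (fun t => mkposreal _ (Hd (ofT t))).
apply: NNPP => Hn; apply: H => [[l Hl]]; apply: Hn.
exists (List.map (@ofT m) l) => x Hx.
case: (Hl (toT m x)); first by apply/bounded_toT.
move=> t [Ht [Hb Hc]]; exists (ofT t); split; first exact: List.in_map.
split; first exact: bounded_ofT Hb.
exact: close_toT Hc.
Qed.


Lemma min_list (T : Type) (l : list T) (P : T -> R -> Prop) :
  (forall x, List.In x l -> exists r, 0 < r /\ P x r) ->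
  (forall x r r', P x r -> 0 < r' -> r' <= r -> P x r') ->
  exists r, 0 < r /\ forall x, List.In x l -> P x r.
Proof.
move=> H Hm; elim: l H => [|a l IH] H; first by exists 1; split=> //; lra.
case: (H a (or_introl erefl)) => ra [Hra Pa].
case: IH => [x Hx|r [Hr Pr]]; first exact: H x (or_intror Hx).
exists (Rmin ra r); split; first exact: Rmin_pos.
move=> x [<-|Hx]; first by apply: (Hm _ ra) => //; [exact: Rmin_pos| exact: Rmin_l].
apply: (Hm _ r); [exact: Pr| exact: Rmin_pos| exact: Rmin_r].
Qed.

Section Bigs.
Variable N : nat.
Implicit Types F G : 'I_N -> R.

Lemma bigR_le F G : (forall i, F i <= G i) -> \big[Rplus/0]_(i < N) F i <= \big[Rplus/0]_(i < N) G i.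
Proof. move=> H; elim/big_rec2: _ => [|i x y _ Hxy]; [lra| have := H i; lra]. Qed.

Lemma bigR_ge0 F : (forall i, 0 <= F i) -> 0 <= \big[Rplus/0]_(i < N) F i.
Proof. move=> H; elim/big_rec: _ => [|i x _ Hx]; [lra| have := H i; lra]. Qed.

Lemma bigR_abs F : Rabs (\big[Rplus/0]_(i < N) F i) <= \big[Rplus/0]_(i < N) Rabs (F i).
Proof.
elim/big_rec2: _ => [|i x y _ Hxy]; first by rewrite Rabs_R0; lra.
apply: Rle_trans; first exact: Rabs_triang. lra.
Qed.

Lemma bigR_scale c F : \big[Rplus/0]_(i < N) (c * F i) = c * \big[Rplus/0]_(i < N) F i.
Proof. elim/big_rec2: _ => [|i x y _ ->]; ring. Qed.

Lemma bigR_plus F G : \big[Rplus/0]_(i < N) (F i + G i) = \big[Rplus/0]_(i < N) F i + \big[Rplus/0]_(i < N) G i.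
Proof. exact: big_split. Qed.

Lemma bigR_opp F : \big[Rplus/0]_(i < N) (- F i) = - \big[Rplus/0]_(i < N) F i.
Proof. elim/big_rec2: _ => [|i x y _ ->]; ring. Qed.

Lemma bigR_const c : \big[Rplus/0]_(i < N) c = INR N * c.
Proof. rewrite big_const_ord; elim: N => [|k IH]; [rewrite /=; ring| rewrite iterS IH S_INR; ring]. Qed.

Lemma bigR_single F (j : 'I_N) : (forall i, 0 <= F i) -> F j <= \big[Rplus/0]_(i < N) F i.
Proof.
move=> H; rewrite (bigD1 j) //=.
set S := (X in _ <= _ + X).
have : 0 <= S by rewrite /S; elim/big_rec: _ => [|i x _ Hx]; [lra| have := H i; lra].
lra.
Qed.
End Bigs.

Definition combo n (s : seq (pt n)) (w : nat -> R) (i : 'I_n.+1) :=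
  \big[Rplus/0]_(j < size s) (w j * nth (fun _ => 0) s j i).

Lemma hull_sep n (s : seq (pt n)) (t : pt n) : ~ in_hull s t ->
  exists r, 0 < r /\ forall y, in_hull s y -> exists i, r <= Rabs (y i - t i).
Proof.
move=> Hns.
set k := size s.
pose good (w : nat -> R) := (forall j, (j < k)%N -> 0 <= w j) /\ \big[Rplus/0]_(j < k) w j = 1.
have Hdel : forall w : nat -> R, exists d, 0 < d /\
   (good w -> exists i, forall w' : nat -> R, (forall j, (j < k)%N -> Rabs (w' j - w j) < d) ->
        d <= Rabs (combo s w' i - t i)) /\
   (~ good w -> (forall j, (j < k)%N -> 0 <= w j) -> forall w' : nat -> R,
        (forall j, (j < k)%N -> Rabs (w' j - w j) < d) -> \big[Rplus/0]_(j < k) w' j <> 1).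
  move=> w; case: (classic (good w)) => Hg.
    have [i Hi] : exists i, combo s w i <> t i.
      apply: NNPP => Hn; apply: Hns; exists w; split; first exact: Hg.1.
      split; first exact: Hg.2.
      move=> i; apply: NNPP => Hne; apply: Hn; exists i => E; apply: Hne; rewrite -E //.
    set e := Rabs (combo s w i - t i).
    have He : 0 < e by apply: Rabs_pos_lt; lra.
    set C := \big[Rplus/0]_(j < k) Rabs (nth (fun _ => 0) s j i).
    have HC : 0 <= C by apply: bigR_ge0 => j; exact: Rabs_pos.
    exists (e / (2 * (C + 1))).
    have Hd : 0 < e / (2 * (C + 1)) by apply: Rdiv_lt_0_compat; lra.
    split=> //; split=> [_|]; last by [].
    exists i => w' Hw'.
    have E : combo s w' i - combo s w i =
      \big[Rplus/0]_(j < k) ((w' j - w j) * nth (fun _ => 0) s j i).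
      rewrite /combo -/k /Rminus -bigR_opp -bigR_plus; apply: eq_bigr => j _; ring.
    have B : Rabs (combo s w' i - combo s w i) <= e / (2 * (C + 1)) * C.
      rewrite E -bigR_scale; apply: Rle_trans; first exact: bigR_abs.
      apply: bigR_le => j; rewrite Rabs_mult.
      apply: Rmult_le_compat_r; first exact: Rabs_pos.
      apply: Rlt_le; exact: Hw'.
    have B2 : e / (2 * (C + 1)) * C <= e / 2.
      have -> : e / (2 * (C + 1)) * C = e / 2 * (C / (C + 1)) by field; lra.
      have : C / (C + 1) <= 1.
        apply: (Rmult_le_reg_r (C + 1)); first lra.
        rewrite /Rdiv Rmult_assoc Rinv_l; lra.
      have : 0 <= e / 2 by lra.
      nra.
    have B3 : e / (2 * (C + 1)) <= e / 2.
      apply: Rmult_le_compat_l; first lra.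
      apply: Rinv_le_contravar; lra.
    have T := Rabs_triang_inv (combo s w i - t i) (combo s w i - combo s w' i).
    replace (combo s w i - t i - (combo s w i - combo s w' i)) with (combo s w' i - t i) in T by ring.
    rewrite -/e Rabs_minus_sym in T.
    lra.
  case: (classic (forall j, (j < k)%N -> 0 <= w j)) => Hn; last first.
    exists 1; split; first lra; split=> // _ H; by case: Hn.
  have Hs : \big[Rplus/0]_(j < k) w j <> 1 by move=> Hs; apply: Hg; split.
  set a := Rabs (\big[Rplus/0]_(j < k) w j - 1).
  have Ha : 0 < a by apply: Rabs_pos_lt; lra.
  have Hk : 0 <= INR k by exact: pos_INR.
  exists (a / (INR k + 1)).
  have Hd : 0 < a / (INR k + 1) by apply: Rdiv_lt_0_compat; lra.
  split=> //; split=> // _ _ w' Hw' Hs'.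
  have E : \big[Rplus/0]_(j < k) w' j - \big[Rplus/0]_(j < k) w j =
      \big[Rplus/0]_(j < k) (w' j - w j).
    rewrite /Rminus -bigR_opp -bigR_plus; apply: eq_bigr => j _; ring.
  have B : Rabs (\big[Rplus/0]_(j < k) (w' j - w j)) <= INR k * (a / (INR k + 1)).
    rewrite -bigR_const; apply: Rle_trans; first exact: bigR_abs.
    apply: bigR_le => j; apply: Rlt_le; exact: Hw'.
  rewrite -E Hs' -/a in B.
  rewrite Rabs_minus_sym -/a in B.
  have : INR k * (a / (INR k + 1)) < a.
    have -> : INR k * (a / (INR k + 1)) = a * (INR k / (INR k + 1)) by field; lra.
    have : INR k / (INR k + 1) < 1.
      apply: (Rmult_lt_reg_r (INR k + 1)); first lra.
      rewrite /Rdiv Rmult_assoc Rinv_l; lra.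
    nra.
  lra.
case: (choice _ Hdel) => delta Hdelta.
have Hpos : forall w, 0 < delta w by move=> w; case: (Hdelta w).
case: (cover_box k 0 1 Hpos) => l Hl.
case: (@min_list _ l (fun w r => r <= delta w)) => [w _|x r r' H1 H2 H3|r [Hr Hrl]].
- exists (delta w); split; [exact: Hpos| lra].
- lra.
exists r; split=> // y [w' [Hw'0 [Hw'1 Hy]]].
have Hbox : forall j, (j < k)%N -> 0 <= w' j <= 1.
  move=> j Hj; split; first exact: Hw'0.
  rewrite -Hw'1; apply: (bigR_single (F := fun j : 'I_k => w' (j : nat)) (Ordinal Hj)).
  move=> i; exact: Hw'0.
case: (Hl w' Hbox) => w [Hwl [Hwb Hwc]].
case: (Hdelta w) => _ [Hgood Hbad].
case: (classic (good w)) => Hg.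
  case: (Hgood Hg) => i Hi; exists i.
  rewrite Hy; apply: Rle_trans (Hrl _ Hwl) _; exact: (Hi w' Hwc).
exfalso; apply: (Hbad Hg _ w' Hwc Hw'1) => j Hj; exact: (Hwb j Hj).1.
Qed.


Lemma ex_minP (P : nat -> Prop) k : P k -> exists m, P m /\ forall j, (j < m)%N -> ~ P j.
Proof.
move=> Pk; apply: NNPP => Hn.
have H : forall N j, (j <= N)%N -> ~ P j.
  elim=> [|N IH] j Hj.
    rewrite leqn0 in Hj; move/eqP: Hj => -> P0; apply: Hn; exists 0%N; split=> // j'; by rewrite ltn0.
  rewrite leq_eqVlt in Hj; case/orP: Hj => [/eqP ->|Hj]; last exact: IH.
  move=> PN; apply: Hn; exists N.+1; split=> // j' Hj'; apply: IH; by rewrite -ltnS.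
exact: (H k k (leqnn k) Pk).
Qed.

Lemma size_mask_le (T : Type) (m : bitseq) (s : seq T) : (size (mask m s) <= size s)%N.
Proof.
elim: s m => [|x s IH] [|b m] //=; case: b => /=; first by rewrite ltnS.
exact: leq_trans (IH m) (leqnSn _).
Qed.

Lemma mask_full (T : Type) (m : bitseq) (s : seq T) :
  size m = size s -> (size s <= size (mask m s))%N -> mask m s = s.
Proof.
elim: s m => [|x s IH] [|b m] //= [Hm]; case: b => /= H.
  by rewrite (IH m Hm).
exfalso; have H2 := size_mask_le m s; have := leq_trans H H2; by rewrite ltnn.
Qed.

Lemma In_mask (T : Type) (m : bitseq) (s : seq T) v : List.In v (mask m s) -> List.In v s.
Proof.
elim: s m => [|x s IH] [|b m] //=; case: b => /=; first by case=> [->|H]; [left| right; exact: (IH m H)].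
move=> H; right; exact: (IH m H).
Qed.

Lemma vert_in_hull n (s : seq (pt n)) j : (j < size s)%N -> in_hull s (nth (fun _ => 0) s j).
Proof.
move=> Hj; exists (fun j' => if j' == j then 1 else 0); split.
  move=> j' _; case: (j' == j); lra.
split.
  rewrite (bigD1 (Ordinal Hj)) //= eqxx big1; first ring.
  move=> i /negP Hi; case: eqP => // E; exfalso; apply: Hi; apply/eqP; exact: val_inj.
move=> i; rewrite (bigD1 (Ordinal Hj)) //= eqxx big1; first ring.
move=> i' /negP Hi; case: eqP => E; last ring.
exfalso; apply: Hi; apply/eqP; exact: val_inj.
Qed.

Definition e0 n : pt n := fun i => if i == ord0 then 1 else 0.

Lemma inA_e0 n : inA (@e0 n).
Proof.
rewrite /inA /e0 (bigD1 ord0) //= big1; first ring.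
by move=> i /negPf ->.
Qed.

Lemma hull_inA n K (HK : @subdivides_std_simplex n K) s x : K s -> in_hull s x -> inA x.
Proof. move=> Ks Hx; case: (sd_in_face HK Ks) => F [_ H]; exact: (H x Hx).1.1. Qed.

Lemma sep_vertex n K (HK : @subdivides_std_simplex n K) (t : pt n) :
  exists v, inA v /\ exists r, 0 < r /\ forall s, K s -> ~ List.In v s ->
    forall y, in_hull s y -> exists i, r <= Rabs (y i - t i).
Proof.
have [v [Hv Hvs]] : exists v, inA v /\ forall s, K s -> ~ List.In v s -> ~ in_hull s t.
  case: (classic (exists s, K s /\ in_hull s t)) => [[s0 [Ks0 Hs0]]|Hn]; last first.
    exists (@e0 n); split; first exact: inA_e0.
    move=> s Ks _ Hs; apply: Hn; by exists s.
  case: (@ex_minP (fun k => exists s, K s /\ in_hull s t /\ size s = k) (size s0)).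
    by exists s0.
  move=> k [[tau [Kt [Ht Hsz]]] Hmin].
  have Hne := sd_nonempty HK Kt.
  case Etau : tau Hne => [//|v tau'] _.
  exists v; split.
    apply: (hull_inA HK Kt); have := vert_in_hull (s := tau) (j := 0%N).
    rewrite Etau /=; apply; done.
  move=> s Ks Hv Hs; apply: Hv.
  case: (sd_inter HK Ks Kt) => [H|[r [[m1 [Hm1 [Er _]]] [[m2 [Hm2 [Er2 Hr0]]] Hr]]]].
    by case: (H t).
  have Kr : K r by apply: (sd_faces HK Kt); exists m2.
  have Htr : in_hull r t by apply/Hr.
  have Hk : (k <= size r)%N.
    rewrite leqNgt; apply/negP => Hlt; apply: (Hmin _ Hlt); by exists r.
  have Ert : r = tau.
    rewrite Er2; apply: mask_full => //; by rewrite -Er2 Hsz.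
  rewrite Er in Ert; apply: (@In_mask _ m1); rewrite Ert Etau; by left.
case: (sd_locfin HK t) => d [Hd [L HL]].
case: (@min_list _ L (fun s r => K s -> ~ List.In v s -> forall y, in_hull s y ->
          exists i, r <= Rabs (y i - t i))).
- move=> s _; case: (classic (K s /\ ~ List.In v s)) => [[Ks Hvs']|Hno].
    case: (hull_sep (Hvs s Ks Hvs')) => r [Hr H]; exists r; split=> // _ _; exact: H.
  exists 1; split; first lra; move=> Ks Hvs'; by case: Hno.
- move=> s r r' H Hr' Hle Ks Hvs' y Hy; case: (H Ks Hvs' y Hy) => i Hi; exists i; lra.
move=> r [Hr Hrl]; exists v; split=> //; exists (Rmin d r); split; first exact: Rmin_pos.
move=> s Ks Hvs' y Hy.
case: (classic (exists i, d <= Rabs (y i - t i))) => [[i Hi]|Hno].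
  exists i; have := Rmin_l d r; lra.
have Hin : List.In s L.
  apply: (HL s Ks); exists y; split=> // i.
  apply: Rnot_le_lt => H; apply: Hno; by exists i.
case: (Hrl s Hin Ks Hvs' y Hy) => i Hi; exists i; have := Rmin_r d r; lra.
Qed.


Section BigSeq.
Variables (I : Type) (r : seq I).
Implicit Types F G : I -> R.
Lemma bigS_scale_r F c : (\big[Rplus/0]_(p <- r) F p) * c = \big[Rplus/0]_(p <- r) (F p * c).
Proof. elim/big_rec2: _ => [|i x y _ <-]; ring. Qed.
Lemma bigS_scale_l F c : c * (\big[Rplus/0]_(p <- r) F p) = \big[Rplus/0]_(p <- r) (c * F p).
Proof. elim/big_rec2: _ => [|i x y _ <-]; ring. Qed.
Lemma bigS_ge0 F : (forall p, 0 <= F p) -> 0 <= \big[Rplus/0]_(p <- r) F p.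
Proof. move=> H; elim/big_rec: _ => [|i x _ Hx]; [lra| have := H i; lra]. Qed.
Lemma bigS_plus F G : \big[Rplus/0]_(p <- r) (F p + G p) = \big[Rplus/0]_(p <- r) F p + \big[Rplus/0]_(p <- r) G p.
Proof. exact: big_split. Qed.
Lemma bigS_opp F : \big[Rplus/0]_(p <- r) (- F p) = - \big[Rplus/0]_(p <- r) F p.
Proof. elim/big_rec2: _ => [|i x y _ ->]; ring. Qed.
Lemma bigS_ext F G : (forall p, List.In p r -> F p = G p) -> \big[Rplus/0]_(p <- r) F p = \big[Rplus/0]_(p <- r) G p.
Proof.
elim: r => [|a r' IH] H; first by rewrite !big_nil.
rewrite !big_cons H /=; last by left.
by rewrite IH // => p Hp; apply: H; right.
Qed.
Lemma bigS_single F p : (forall q, 0 <= F q) -> List.In p r -> F p <= \big[Rplus/0]_(q <- r) F q.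
Proof.
move=> H; elim: r => [|a r' IH] //= [<-|Hp]; rewrite big_cons.
  have : 0 <= \big[Rplus/0]_(q <- r') F q by elim/big_rec: _ => [|i x _ Hx]; [lra| have := H i; lra].
  lra.
have := IH Hp; have := H a; lra.
Qed.
End BigSeq.

Lemma Ck_opp m k f : @Ck m k f -> Ck k (fun x => - f x).
Proof. move=> H; apply: (Ck_ext (Ck_mult (Ck_const m k (-1)) H)) => x; ring. Qed.

Lemma Ck_minus m k f g : @Ck m k f -> Ck k g -> Ck k (fun x => f x - g x).
Proof. move=> Hf Hg; exact: (Ck_plus Hf (Ck_opp Hg)). Qed.

Section Construction.
Variables (n : nat) (P : seq (pt n)) (V : pt n -> pt n) (rho2 : pt n -> R) (c : R).

Definition sqd (x p : pt n) := \big[Rplus/0]_(i < n.+1) ((x i - p i) * (x i - p i)).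
Definition ub (p x : pt n) := beta (rho2 p - sqd x p).
Definition Sf (x : pt n) := \big[Rplus/0]_(p <- P) ub p x.
Definition gam (s : R) := beta (s - c / 2) * / (beta (s - c / 2) + beta (c - s)).
Definition phi (s : R) := s * gam s + c / 2 * (1 - gam s).
Definition Hm (x : pt n) (t : R) : pt n := fun j =>
  x j + t * \big[Rplus/0]_(p <- P) (ub p x * / phi (Sf x) * (V p j - x j)).

Hypothesis Hc : 0 < c.

Lemma den_pos s : 0 < beta (s - c / 2) + beta (c - s).
Proof.
case: (Rlt_le_dec (c / 2) s) => H.
  have := beta_gt0 (y := s - c / 2) ltac:(lra); have := beta_ge0 (c - s); lra.
have := beta_gt0 (y := c - s) ltac:(lra); have := beta_ge0 (s - c / 2); lra.
Qed.

Lemma gam_bounds s : 0 <= gam s <= 1.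
Proof.
have D := den_pos s; rewrite /gam.
have A := beta_ge0 (s - c / 2); have B := beta_ge0 (c - s).
split.
  apply: Rmult_le_pos => //; apply: Rlt_le; exact: Rinv_0_lt_compat.
apply: (Rmult_le_reg_r (beta (s - c / 2) + beta (c - s))) => //.
rewrite Rmult_assoc Rinv_l; lra.
Qed.

Lemma phi_pos s : 0 <= s -> c / 2 <= phi s.
Proof.
move=> Hs; rewrite /phi; have [G0 G1] := gam_bounds s.
case: (Rle_lt_dec s (c / 2)) => H.
  have -> : gam s = 0 by rewrite /gam beta_npos; [ring| lra].
  lra.
nra.
Qed.

Lemma phi_id s : c <= s -> phi s = s.
Proof.
move=> H; rewrite /phi; have -> : gam s = 1.
  rewrite /gam (beta_npos (y := c - s)); last lra.
  rewrite Rplus_0_r Rinv_r //; have := beta_gt0 (y := s - c / 2) ltac:(lra); lra.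
ring.
Qed.

Lemma Sf_ge0 x : 0 <= Sf x.
Proof. apply: bigS_ge0 => p; exact: beta_ge0. Qed.

Definition xv (v : 'I_n.+2 -> R) : pt n := fun i => v (widen_ord (leqnSn n.+1) i).

Lemma Ck_ub k p : Ck k (fun v => ub p (xv v)).
Proof.
rewrite /ub /sqd.
apply: (Ck_comp (D := fun _ => True) smooth1_beta) => //.
apply: Ck_minus; first exact: Ck_const.
apply: Ck_big => i; apply: Ck_mult; (apply: Ck_minus; [exact: Ck_proj| exact: Ck_const]).
Qed.

Lemma Ck_Sf k : Ck k (fun v => Sf (xv v)).
Proof. apply: Ck_big => p; exact: Ck_ub. Qed.

Lemma Ck_invphi k : Ck k (fun v => / phi (Sf (xv v))).
Proof.
apply: (Ck_comp (D := fun y => 0 < y) smooth1_inv); last first.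
  move=> v; have := phi_pos (Sf_ge0 (xv v)); lra.
rewrite /phi /gam.
have G : Ck k (fun v => beta (Sf (xv v) - c / 2) * / (beta (Sf (xv v) - c / 2) + beta (c - Sf (xv v)))).
  apply: Ck_mult.
    apply: (Ck_comp (D := fun _ => True) smooth1_beta) => //.
    apply: Ck_minus; [exact: Ck_Sf| exact: Ck_const].
  apply: (Ck_comp (D := fun y => 0 < y) smooth1_inv); last by move=> v; exact: den_pos.
  apply: Ck_plus; (apply: (Ck_comp (D := fun _ => True) smooth1_beta) => //).
    apply: Ck_minus; [exact: Ck_Sf| exact: Ck_const].
  apply: Ck_minus; [exact: Ck_const| exact: Ck_Sf].
apply: Ck_plus; first by apply: Ck_mult; [exact: Ck_Sf| exact: G].
apply: Ck_mult; first exact: Ck_const.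
apply: Ck_minus; [exact: Ck_const| exact: G].
Qed.

Lemma Hm_smooth : smooth_homotopy Hm.
Proof.
move=> j k; rewrite /Hm.
apply: Ck_plus; first exact: Ck_proj.
apply: Ck_mult; first exact: Ck_proj.
apply: Ck_big => p.
apply: Ck_mult; first by apply: Ck_mult; [exact: Ck_ub| exact: Ck_invphi].
apply: Ck_minus; [exact: Ck_const| exact: Ck_proj].
Qed.

Lemma Hm_0 x : Hm x 0 = x.
Proof. apply: functional_extensionality => j; rewrite /Hm; ring. Qed.

Lemma Hm_convex x t j : Hm x t j = (1 - t) * x j + t * Hm x 1 j.
Proof. rewrite /Hm; ring. Qed.

Lemma Hm_inA x t : (forall p, inA (V p)) -> inA x -> inA (Hm x t).
Proof.
move=> HV Hx; rewrite /inA /Hm /= bigS_plus -bigS_scale_l exchange_big /=.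
rewrite [X in _ + t * X](@bigS_ext _ _ _ (fun _ => 0)); last first.
  move=> p _; rewrite -bigS_scale_l /Rminus bigS_plus bigS_opp.
  have := HV p; rewrite /inA => ->; have := Hx; rewrite /inA => ->; ring.
rewrite big1_eq Hx; ring.
Qed.

Lemma ind_sum N (f : nat) (g : nat -> R) :
  \big[Rplus/0]_(j < N) (if f == j then g (j : nat) else 0) = if (f < N)%N then g f else 0.
Proof.
case: ltnP => H.
  rewrite (bigD1 (Ordinal H)) //= eqxx big1 => [|j /negP Hj]; first ring.
  case: eqP => E //; exfalso; apply: Hj; apply/eqP; exact: val_inj.
rewrite big1 // => j _; case: eqP => E //; exfalso; have := ltn_ord j; rewrite -E ltnNge H //.
Qed.

Lemma In_nth_seq (s : seq (pt n)) v : List.In v s -> exists j, (j < size s)%N /\ nth (fun _ => 0) s j = v.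
Proof.
elim: s => [|a s IH] //= [->|H]; first by exists 0%N.
case: (IH H) => j [Hj E]; by exists j.+1.
Qed.

Lemma key_hull (s : seq (pt n)) x : c <= Sf x ->
  (forall p, List.In p P -> ~ List.In (V p) s -> ub p x = 0) -> in_hull s (Hm x 1).
Proof.
move=> HS HZ.
have HS0 : 0 < Sf x by lra.
have Hphi : phi (Sf x) = Sf x by exact: phi_id.
set a := fun p => ub p x * / Sf x.
have Ha0 : forall p, 0 <= a p.
  move=> p; apply: Rmult_le_pos; [exact: beta_ge0| apply: Rlt_le; exact: Rinv_0_lt_compat].
have Ha1 : \big[Rplus/0]_(p <- P) a p = 1.
  rewrite /a -bigS_scale_r -/(Sf x) Rinv_r //; lra.
have HmE : forall i, Hm x 1 i = \big[Rplus/0]_(p <- P) (a p * V p i).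
  move=> i; rewrite /Hm Hphi Rmult_1_l.
  have -> : \big[Rplus/0]_(p <- P) (ub p x * / Sf x * (V p i - x i)) =
     \big[Rplus/0]_(p <- P) (a p * V p i) + - (\big[Rplus/0]_(p <- P) a p * x i).
    rewrite bigS_scale_r -bigS_opp -bigS_plus; apply: eq_bigr => p _; rewrite /a; ring.
  rewrite Ha1; ring.
have [idx Hidx] : exists idx : pt n -> nat, forall p, List.In (V p) s ->
    (idx p < size s)%N /\ nth (fun _ => 0) s (idx p) = V p.
  apply: (choice (fun p j => List.In (V p) s -> (j < size s)%N /\ nth (fun _ => 0) s j = V p)).
  move=> p; case: (classic (List.In (V p) s)) => H; last by exists 0%N.
  case: (In_nth_seq H) => j Hj; by exists j.
have Hout : forall p, List.In p P -> ~ (idx p < size s)%N -> a p = 0.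
  move=> p Hp Hn; rewrite /a HZ //; first ring.
  move=> Hin; apply: Hn; exact: (Hidx p Hin).1.
exists (fun j => \big[Rplus/0]_(p <- P) (if idx p == j then a p else 0)); split.
  move=> j _; apply: bigS_ge0 => p; case: eqP => _ //; lra.
split.
  rewrite exchange_big /= -Ha1; apply: bigS_ext => p Hp.
  rewrite (ind_sum (size s) (idx p) (fun _ => a p)).
  case: ltnP => // H; rewrite Hout //; by rewrite ltnNge H.
move=> i; rewrite HmE.
have -> : \big[Rplus/0]_(j < size s) (\big[Rplus/0]_(p <- P) (if idx p == j then a p else 0) *
     nth (fun _ => 0) s j i) =
  \big[Rplus/0]_(j < size s) \big[Rplus/0]_(p <- P) (if idx p == j then a p * nth (fun _ => 0) s j i else 0).
  apply: eq_bigr => j _; rewrite bigS_scale_r; apply: eq_bigr => p _; case: eqP => _; ring.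
rewrite exchange_big /=; apply: bigS_ext => p Hp.
rewrite (ind_sum (size s) (idx p) (fun j => a p * nth (fun _ => 0) s j i)).
case: (classic (List.In (V p) s)) => Hin.
  have [H1 H2] := Hidx p Hin; rewrite H1 H2 //.
have -> : a p = 0 by rewrite /a HZ //; ring.
case: ltnP => _; ring.
Qed.
End Construction.


Lemma hull_convex n (s : seq (pt n)) a b t : in_hull s a -> in_hull s b -> 0 <= t <= 1 ->
  in_hull s (fun j => (1 - t) * a j + t * b j).
Proof.
move=> [wa [Ha0 [Ha1 Ha]]] [wb [Hb0 [Hb1 Hb]]] Ht.
exists (fun j => (1 - t) * wa j + t * wb j); split.
  move=> j Hj; have := Ha0 j Hj; have := Hb0 j Hj; nra.
split.
  rewrite bigS_plus -!bigS_scale_l Ha1 Hb1; ring.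
move=> i; rewrite Ha Hb !bigS_scale_l -bigS_plus; apply: eq_bigr => j _; ring.
Qed.

Lemma In_enum N (i : 'I_N) : List.In i (enum 'I_N).
Proof.
have : i \in enum 'I_N by rewrite mem_enum.
elim: (enum 'I_N) => [|a l IH]; first by rewrite in_nil.
rewrite /= inE => /orP [/eqP ->|H]; [by left| right; exact: IH].
Qed.

Lemma inDelta_le1 n (y : pt n) i : inDelta y -> 0 <= y i <= 1.
Proof.
move=> [HA H0]; split; first exact: H0.
rewrite -HA; apply: (bigR_single (F := y)) => j; exact: H0.
Qed.

Lemma sq_lt_half (D r N : R) : 0 < r -> 1 <= N -> D * D < N * (r / (2 * N) * (r / (2 * N) * 1)) ->
  Rabs D < r / 2.
Proof.
move=> Hr HN H.
have E : N * (r / (2 * N) * (r / (2 * N) * 1)) = (r / 2) * (r / 2) / N by field; lra.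
rewrite E in H.
have H2 : (r / 2) * (r / 2) / N <= (r / 2) * (r / 2).
  have Hp : 0 <= (r / 2) * (r / 2) by nra.
  apply: (Rmult_le_reg_r N); first lra.
  rewrite /Rdiv Rmult_assoc Rinv_l; nra.
apply: Rnot_le_lt => Hc.
have : (r / 2) * (r / 2) <= Rabs D * Rabs D by apply: Rmult_le_compat; lra.
rewrite -Rabs_mult Rabs_pos_eq; [lra| nra].
Qed.

Unset Implicit Arguments.

Theorem mainTheorem13 (n : nat) (K : seq (pt n) -> Prop)
  (HK : subdivides_std_simplex K) :
  exists H : pt n -> R -> pt n,
    smooth_homotopy H /\
    (forall x t, inA x -> 0 <= t <= 1 -> inA (H x t)) /\
    (forall x, inA x -> H x 0 = x) /\
    (forall t, 0 <= t <= 1 -> forall s, K s ->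
       forall x, in_hull s x -> in_hull s (H x t)) /\
    (forall s, K s -> exists U : pt n -> Prop,
       open_in_A U /\ (forall x, in_hull s x -> U x) /\
       (forall x, U x -> in_hull s (H x 1))).
Proof.
have [f Hf] : exists f : pt n -> pt n * R, forall t, inA (f t).1 /\ 0 < (f t).2 /\
    forall s, K s -> ~ List.In (f t).1 s -> forall y, in_hull s y -> exists i, (f t).2 <= Rabs (y i - t i).
  apply: (choice (fun t (vr : pt n * R) => inA vr.1 /\ 0 < vr.2 /\
    forall s, K s -> ~ List.In vr.1 s -> forall y, in_hull s y -> exists i, vr.2 <= Rabs (y i - t i))) => t.
  case: (sep_vertex HK t) => v [Hv [r [Hr H]]]; by exists (v, r).
set V := fun t => (f t).1; set Rr := fun t => (f t).2.
have HV : forall p, inA (V p) by move=> p; exact: (Hf p).1.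
have HRr : forall p, 0 < Rr p by move=> p; exact: (Hf p).2.1.
have Hsp : forall p s, K s -> ~ List.In (V p) s -> forall y, in_hull s y -> exists i, Rr p <= Rabs (y i - p i).
  move=> p; exact: (Hf p).2.2.
have HN : 1 <= INR n + 2 by have := pos_INR n; lra.
set del := fun p : pt n => Rr p / (2 * (INR n + 2)).
have Hdel : forall p, 0 < del p by move=> p; apply: Rdiv_lt_0_compat; [exact: HRr| lra].
have Hdw : forall w : nat -> R, 0 < del (fun i : 'I_n.+1 => w i) by move=> w; exact: Hdel.
case: (cover_box n.+1 (-1) 2 Hdw) => l Hl.
set P := map (fun w : nat -> R => (fun i : 'I_n.+1 => w i)) l.
have Hcov : forall x : pt n, (forall i, -1 <= x i <= 2) -> exists p, List.In p P /\ forall i, Rabs (x i - p i) < del p.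
  move=> x Hx.
  case: (Hl (fun k => x (inord k))) => [k Hk|w [Hw [_ Hwc]]].
    exact: Hx.
  exists (fun i : 'I_n.+1 => w i); split; first exact: (List.in_map (fun w : nat -> R => (fun i : 'I_n.+1 => w i))).
  move=> i; have := Hwc i (ltn_ord i); by rewrite inord_val.
case: (@min_list _ P (fun p r => r <= beta (del p ^ 2))) => [p _|p r r' H1 H2 H3|c [Hc Hcl]].
- exists (beta (del p ^ 2)); split; last lra; apply: beta_gt0; apply: pow_lt; exact: Hdel.
- lra.
case: (@min_list _ P (fun p r => r <= Rr p / 2)) => [p _|p r r' H1 H2 H3|e0 [He0 He0l]].
- exists (Rr p / 2); split; last lra; have := HRr p; lra.
- lra.
set eta := Rmin 1 e0.
have Heta : 0 < eta by apply: Rmin_pos; lra.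
have Heta1 : eta <= 1 by exact: Rmin_l.
have HetaP : forall p, List.In p P -> eta <= Rr p / 2.
  move=> p Hp; have := He0l p Hp; have := Rmin_r 1 e0; rewrite -/eta; lra.
set rho2 := fun p : pt n => (INR n + 2) * del p ^ 2.
set H := Hm P V rho2 c.
have Ulem : forall s, K s -> forall x, (exists y, in_hull s y /\ forall i, Rabs (x i - y i) < eta) ->
    in_hull s (H x 1).
  move=> s Ks x [y [Hy Hxy]].
  have HyD : inDelta y by case: (sd_in_face HK Ks) => F [_ HF]; exact: (HF y Hy).1.
  have Hbox : forall i, -1 <= x i <= 2.
    move=> i; have := inDelta_le1 i HyD; have := Rabs_def2 _ _ (Hxy i); lra.
  apply: key_hull => //.
  - case: (Hcov x Hbox) => p [Hp Hpx].
    apply: Rle_trans (Hcl p Hp) _.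
    apply: Rle_trans; last by apply: (bigS_single (F := fun q => ub rho2 q x) (p := p)); [move=> q; exact: beta_ge0| exact: Hp].
    rewrite /ub; apply: beta_le.
    have Hsq : sqd x p <= (INR n + 1) * del p ^ 2.
      rewrite /sqd; apply: Rle_trans.
        apply: (bigR_le (G := fun _ => del p ^ 2)) => i.
        have := Rabs_def2 _ _ (Hpx i); rewrite /=; nra.
      rewrite bigR_const S_INR; lra.
    rewrite /rho2; lra.
  - move=> p Hp Hvs; case: (Hsp p s Ks Hvs y Hy) => i Hi.
    rewrite /ub; apply: beta_npos; apply: Rnot_lt_le => Hlt.
    have Hsq : (x i - p i) * (x i - p i) <= sqd x p.
      by apply: (bigR_single (F := fun i => (x i - p i) * (x i - p i))) => j; exact: Rle_0_sqr.
    have Hxp : Rabs (x i - p i) < Rr p / 2.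
      apply: (sq_lt_half (HRr p) HN).
      rewrite /rho2 /del in Hlt; lra.
    have := HetaP p Hp; have := Hxy i.
    have := Rabs_triang (y i - x i) (x i - p i).
    replace (y i - x i + (x i - p i)) with (y i - p i) by ring.
    rewrite (Rabs_minus_sym (y i) (x i)); lra.
exists H; split; first exact: Hm_smooth.
split; first by move=> x t Hx _; exact: Hm_inA.
split; first by move=> x _; exact: Hm_0.
split.
  move=> t Ht s Ks x Hx.
  have Hx1 : in_hull s (H x 1).
    apply: Ulem => //; exists x; split=> // i; rewrite Rminus_diag Rabs_R0; lra.
  have -> : H x t = fun j => (1 - t) * x j + t * H x 1 j.
    apply: functional_extensionality => j; exact: Hm_convex.
  exact: hull_convex.
move=> s Ks.
exists (fun x => inA x /\ exists y, in_hull s y /\ forall i, Rabs (x i - y i) < eta); split.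
  move=> x [HxA [y [Hy Hxy]]]; split=> //.
  case: (@min_list _ (enum 'I_n.+1) (fun i r => r <= eta - Rabs (x i - y i))) =>
      [i _|i r r' H1 H2 H3|d [Hd Hdl]].
  - exists (eta - Rabs (x i - y i)); split; last lra; have := Hxy i; lra.
  - lra.
  exists d; split=> // z Hz Hzx; split=> //; exists y; split=> // i.
  have := Hdl i (In_enum i); have := Hzx i.
  have := Rabs_triang (z i - x i) (x i - y i).
  replace (z i - x i + (x i - y i)) with (z i - y i) by ring; lra.
split.
  move=> x Hx; split; first exact: (hull_inA HK Ks Hx).
  exists x; split=> // i; rewrite Rminus_diag Rabs_R0; lra.
move=> x [_ Hx]; exact: Ulem.
Qed.
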